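(* Let $G=(V,E)$ be a finite simple graph with $V\neq\emptyset$ and let $w:V\to\mathbb{N}^+$ be a weight function on its vertices. Let $W=w[V]$ and $K=\alpha_w(G)$. Then $$\tilde{w}[E]\ \ge\ \frac{W^2}{K}-W .$$
   Context: For a function $f$ on a set $T$, $f[T]=\sum_{t\in T}f(t)$. For a set $F$ of edges of $G$, $\tilde{w}[F]=\sum_{uv\in F}\big(w(u)+w(v)\big)$. $\alpha_w(G)$ is the maximum of $w[I]$ over all independent sets $I\subseteq V$. *)

(* Defs.v *)
(* A finite simple graph is a symmetric irreflexive relation
   e on a finType T (vertex set V = T). *)
From HB Require Import structures.
From mathcomp Require Import all_boot all_order all_algebra.
Set Implicit Arguments. Unset Strict Implicit. Unset Printing Implicit Defensive.

Definition edges (T : finType) (e : rel T) : {set {set T}} :=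
  [set [set u; v] | u in T, v in T & e u v].

Definition wsum (T : finType) (w : T -> nat) (S : {set T}) : nat :=
  \sum_(x in S) w x.

Definition wtilde_edges (T : finType) (e : rel T) (w : T -> nat) : nat :=
  \sum_(f in edges e) wsum w f.

Definition independent (T : finType) (e : rel T) (I : {set T}) : bool :=
  [forall x in I, forall y in I, ~~ e x y].

Definition alpha_w (T : finType) (e : rel T) (w : T -> nat) : nat :=
  \max_(I : {set T} | independent e I) wsum w I.

(* Main.v *)
Require Import Defs.
From HB Require Import structures.
From mathcomp Require Import all_boot all_order all_algebra.
From mathcomp Require Import ring.
Import Order.TTheory GRing.Theory Num.Theory.

Lemma edges_card (T : finType) (e : rel T) (e_sym : symmetric e) (e_irr : irreflexive e) (x : T) :
  #|[set f in edges e | x \in f]| = #|[set u | e x u]|.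
Proof.
have -> : [set f in edges e | x \in f] = (fun u => [set x; u]) @: [set u | e x u].
  apply/setP => f; rewrite !inE; apply/idP/idP.
  - rewrite /edges; case/andP => /imset2P [a b aT].
    rewrite inE => /andP [_ eab] ->.
    move/set2P => [xa|xb]; apply/imsetP.
      by exists b; rewrite ?inE xa.
    exists a; first by rewrite inE e_sym xb.
    by rewrite setUC xb.
  - case/imsetP => u; rewrite inE => exu ->; apply/andP; split; last by rewrite set21.
    rewrite /edges.
    by apply/imset2P; exists x u; rewrite ?inE.
apply: card_in_imset => u v; rewrite !inE => eu ev eq.
have : v \in [set x; u] by rewrite eq set22.
case/set2P => // vx; by rewrite vx e_irr in ev.
Qed.

Lemma handshake (T : finType) (e : rel T) (e_sym : symmetric e) (e_irr : irreflexive e) (w : T -> nat) :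
  wtilde_edges e w = \sum_x w x * #|[set u | e x u]|.
Proof.
rewrite /wtilde_edges /wsum.
under eq_bigr => f _ do rewrite (big_mkcond (fun x => x \in f)) /=.
rewrite exchange_big /=; apply: eq_bigr => x _.
rewrite -big_mkcondr sum_nat_const mulnC -edges_card //.
by congr (_ * _); apply: eq_card => f; rewrite inE.
Qed.

Set Implicit Arguments. Unset Strict Implicit.
Local Open Scope ring_scope.

Definition nb (T : finType) (e : rel T) (S : {set T}) (v : T) : {set T} :=
  [set u in S | e v u].

Definition hh (T : finType) (e : rel T) (w : T -> nat) (S : {set T}) (u : T) : rat :=
  (w u)%:R / (#|nb e S u|.+1)%:R.

Definition cw (T : finType) (e : rel T) (w : T -> nat) (S : {set T}) : rat :=
  \sum_(u in S) hh e w S u.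

Lemma good_vertex (T : finType) (e : rel T) (e_sym : symmetric e) (e_irr : irreflexive e)
  (w : T -> nat) (S : {set T}) : S != set0 ->
  exists2 v, v \in S & \sum_(u in v |: nb e S v) hh e w S u <= (w v)%:R.
Proof.
move=> /set0Pn [v0 v0S].
case: (pickP [pred v | (v \in S) && (\sum_(u in v |: nb e S v) hh e w S u <= (w v)%:R)]) => [v /andP [vS Hv]|H]; first by exists v.
exfalso.
have lt : \sum_(v in S) ((w v)%:R : rat) < \sum_(v in S) \sum_(u in v |: nb e S v) hh e w S u.
  apply: ltr_sum; first by apply/hasP; exists v0; rewrite ?mem_index_enum.
  move=> v vS; move: (H v); rewrite /= vS /= => /negbT; rewrite -ltNge; done.
move: lt; rewrite lt_def => /andP [/eqP []].
have eqv : forall v, v \in S -> \sum_(u in v |: nb e S v) hh e w S u =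
    \sum_(u in S) (if u \in v |: nb e S v then hh e w S u else 0).
  move=> v vS; rewrite -big_mkcondr; apply: eq_bigl => u.
  rewrite !inE; case: eqP => [->|] //=; first by rewrite vS.
  by move=> _; rewrite andbA andbb.
rewrite (eq_bigr _ eqv) exchange_big /=; apply: eq_bigr => u uS.
rewrite -big_mkcondr sumr_const.
have -> : #|[pred i | (i \in S) && (u \in i |: nb e S i)]| = (#|nb e S u|.+1)%N.
  have nu : u \notin nb e S u by rewrite inE e_irr andbF.
  have <- : #|u |: nb e S u| = (#|nb e S u|.+1)%N by rewrite cardsU1 nu.
  apply: eq_card => i; rewrite !inE.
  case: (eqVneq i u) => [->|niu]; first by rewrite ?uS ?eqxx ?orbT.
  by rewrite /= uS e_sym.

rewrite /hh -(mulr_natr ((w u)%:R / _)) divfK //.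
by rewrite pnatr_eq0.
Qed.

Lemma hh_mono (T : finType) (e : rel T) (w : T -> nat) (S S' : {set T}) u :
  S' \subset S -> hh e w S u <= hh e w S' u.
Proof.
move=> sub; rewrite /hh ler_pdivrMr ?ltr0n // mulrAC ler_pdivlMr ?ltr0n //.
rewrite ler_wpM2l ?ler0n // ler_nat ltnS; apply: subset_leq_card.
by apply/subsetP => x; rewrite !inE => /andP [xS ->]; rewrite (subsetP sub).
Qed.

Lemma caro_wei (T : finType) (e : rel T) (e_sym : symmetric e) (e_irr : irreflexive e)
  (w : T -> nat) : forall n (S : {set T}), (#|S| <= n)%N ->
  exists I : {set T}, [/\ I \subset S, independent e I & cw e w S <= (wsum w I)%:R].
Proof.
elim=> [|n IH] S.
  rewrite leqn0 cards_eq0 => /eqP ->; exists set0; split => //.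
    by apply/forallP => x; rewrite inE.
  by rewrite /cw big_set0 /wsum big_set0.
case: (eqVneq S set0) => [-> _|Sn0 cS].
  exists set0; split => //.
    by apply/forallP => x; rewrite inE.
  by rewrite /cw big_set0 /wsum big_set0.
have [v vS Hv] := good_vertex e_sym e_irr w Sn0.
set N := v |: nb e S v.
set S' := S :\: N.
have vN : v \in N by rewrite setU11.
have NS : N \subset S.
  by apply/subsetP => x; rewrite !inE => /orP [/eqP ->|/andP [] //].
have S'S : S' \subset S by apply: subsetDl.
have cS' : (#|S'| <= n)%N.
  rewrite -ltnS; apply: leq_trans cS; apply: proper_card.
  by apply/properP; split => //; exists v => //; rewrite inE vN.
have [I' [I'S' indI' HI']] := IH S' cS'.
have vI' : v \notin I'.
  by apply/negP => /(subsetP I'S'); rewrite inE vN.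
exists (v |: I'); split.
- by apply/subsetP => x; rewrite in_setU1 => /orP [/eqP ->//|/(subsetP I'S') /(subsetP S'S)].
- have nadj : forall y, y \in I' -> ~~ e v y.
    move=> y /(subsetP I'S'); rewrite !inE negb_or => /andP [/andP [_ H] yS].
    by move: H; rewrite yS.
  apply/forallP => x; apply/implyP; rewrite in_setU1 => /orP [/eqP ->|xI];
    apply/forallP => y; apply/implyP; rewrite in_setU1 => /orP [/eqP ->|yI].
  + by rewrite e_irr.
  + exact: nadj.
  + by rewrite e_sym nadj.
  + by move/forallP: indI' => /(_ x); rewrite xI => /forallP /(_ y); rewrite yI.
- rewrite /wsum big_setU1 //= natrD /cw (big_setID N) /=.
  have -> : S :&: N = N by apply/setIidPr.
  apply: lerD => //; apply: le_trans HI'.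
  by apply: ler_sum => u _; apply: hh_mono.
Qed.

Lemma sum_setT (T : finType) (F : T -> rat) :
  \sum_(i in [set: T]) F i = \sum_i F i.
Proof. by apply: eq_bigl => i; rewrite inE. Qed.

Unset Implicit Arguments.
Theorem theorem3p1 (T : finType) (e : rel T)
  (e_sym : symmetric e) (e_irr : irreflexive e)
  (V_nonempty : (0 < #|T|)%N)
  (w : T -> nat) (w_pos : forall x, (0 < w x)%N) :
  let W := wsum w [set: T] in
  let K := alpha_w e w in
  (W%:R ^+ 2 / K%:R - W%:R : rat) <= (wtilde_edges e w)%:R.
Proof.
cbv zeta; set W := wsum w [set: T]; set K := alpha_w e w.
set F := cw e w [set: T].
set B : rat := \sum_(v in [set: T]) (w v)%:R * (#|nb e [set: T] v|.+1)%:R.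
have [x0 _] : exists x0 : T, true.
  case: (pickP (fun _ : T => true)) => [x0 _|H]; first by exists x0.
  by move: V_nonempty; rewrite (eq_card0 H).
have hpos : forall u, 0 < hh e w [set: T] u.
  by move=> u; rewrite /hh divr_gt0 ?ltr0n.
have Fpos : 0 < F.
  rewrite /F /cw (bigD1 x0) ?inE //=; apply: (lt_le_trans (hpos x0)).
  by rewrite lerDl sumr_ge0 // => u _; rewrite ltW.
have FK : F <= K%:R.
  have [I [_ indI HI]] := caro_wei e_sym e_irr w (leqnn #|[set: T]|).
  apply: (le_trans HI); rewrite ler_nat /K /alpha_w.
  exact: (leq_bigmax_cond I indI).
have BW : B = W%:R + (wtilde_edges e w)%:R.
  rewrite (@handshake T e e_sym e_irr w) /W /wsum /B !natr_sum !sum_setT -big_split /=.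
  apply: eq_bigr => v _.
  rewrite -natrD -natrM; congr (_%:R).
  have -> : #|nb e [set: T] v| = #|[set u | e v u]|.
    by apply: eq_card => u; rewrite !inE.
  by rewrite mulnS addnC mulnC.
have amgm : W%:R ^+ 2 / F <= B.
  set l := (W%:R : rat) / F.
  have term : forall v, 2%:R * l * (w v)%:R <= l ^+ 2 * hh e w [set: T] v
                      + (w v)%:R * (#|nb e [set: T] v|.+1)%:R.
    move=> v; rewrite /hh; set a : rat := (w v)%:R; set c : rat := (#|nb e [set: T] v|.+1)%:R.
    have c0 : c != 0 by rewrite pnatr_eq0.
    rewrite -subr_ge0.
    have -> : l ^+ 2 * (a / c) + a * c - 2%:R * l * a = (a / c) * (l - c) ^+ 2.
      by field; rewrite nat1r pnatr_eq0.
    by rewrite mulr_ge0 ?sqr_ge0 // divr_ge0 ?ler0n.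
  have := @ler_sum _ _ (index_enum T) (fun v => v \in [set: T]) _ _ (fun v _ => term v).
  rewrite big_split /= -!mulr_sumr -/F -/B.
  have -> : \sum_(i in [set: T]) ((w i)%:R : rat) = W%:R by rewrite /W /wsum natr_sum.
  have F0 : F != 0 by rewrite gt_eqF.
  have -> : 2%:R * l * W%:R = 2%:R * (W%:R ^+ 2 / F) by rewrite /l; field.
  have -> : l ^+ 2 * F = W%:R ^+ 2 / F by rewrite /l; field.
  set X := W%:R ^+ 2 / F; move=> H.
  have : X <= B; last by [].
  by rewrite -(lerD2l X) -mulr2n -mulr_natl.
have : (W%:R : rat) ^+ 2 / K%:R <= W%:R ^+ 2 / F.
  have K0 : (0 : rat) < K%:R by apply: lt_le_trans FK.
  rewrite ler_wpM2l ?sqr_ge0 // lef_pV2 ?posrE //.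
move=> H; rewrite lerBlDl -BW; exact: le_trans H amgm.
Qed.
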